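(* Let $\mathcal N$ be a network with parties $A_1,\dots,A_n$ all of whose sources are bipartite, let $p$ be the output distribution of a causally consistent model on $\mathcal N$ (finite output alphabets), and let $f_i$ be arbitrary real-valued functions of the outputs $a_i$. Then for every sign function $\epsilon$ on $\mathcal N$ and every sign matrix $\Gamma_\epsilon$ associated to $\epsilon$, the Schur product $\mathcal C(f_1,\dots,f_n)\circ\Gamma_\epsilon$ is positive semidefinite.
   Context: A network $\mathcal N$ is a bipartite graph between sources $S_\alpha$ and parties $A_i$ ($i=1,\dots,n$); $\alpha\to i$ means $S_\alpha$ is adjacent to $A_i$; no isolated vertices, and no two sources with comparable sets of adjacent parties. Here every source is adjacent to exactly two parties. Covariance matrix: $\mathcal C(f_1,\dots,f_n)_{ij}=\mathbb E[\bar f_i f_j]-\mathbb E[\bar f_i]\,\mathbb E[f_j]$. The Schur product is $(M\circ N)_{ij}=M_{ij}N_{ij}$. A sign function $\epsilon$ assigns $\epsilon(\alpha)\in\{\pm1\}$ to each source. A sign matrix $\Gamma_\epsilon=(\gamma_{ij})$ is a real symmetric $n\times n$ matrix with $\gamma_{ii}=1$ and $\gamma_{ij}=\epsilon(\alpha)$ whenever $i\neq j$ and $\alpha\to i,j$; entries $\gamma_{ij}$ for $i\ne j$ sharing no source are arbitrary. Non-fanout inflation of order $d\ge 2$: choose, for every pair $(\alpha,i)$ with $\alpha\to i$, a permutation $\pi_i^\alpha$ of $\{1,\dots,d\}$. The inflated network has parties $A_i^{(k)}$ and sources $S_\alpha^{(k)}$ ($1\le k\le d$), with $S_\alpha^{(k)}$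 adjacent to $A_i^{((\pi_i^\alpha)^{-1}(k))}$ whenever $\alpha\to i$, and no other adjacencies. Causally consistent model on $\mathcal N$: a joint distribution $p(a_1,\dots,a_n)$ of the outputs of $\mathcal N$ together with, for every non-fanout inflation of every order $d\ge2$, a joint distribution of the outputs $a_i^{(k)}$ of its parties, such that: (C0) if $A_i\neq A_j$ share no source in $\mathcal N$, then $p(a_i,a_j)=p(a_i)p(a_j)$; (C1) in every inflation, each $a_i^{(k)}$ has marginal $p(a_i)$, and if $A_i^{(k)}$ and $A_j^{(l)}$ with $i\neq j$ share a source in the inflation, then $(a_i^{(k)},a_j^{(l)})$ has joint distribution $p(a_i,a_j)$; (C2) in every inflation, if two distinct parties share no source, the joint distribution of their outputs is the product of their marginals. *)

(* Defs.v *)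
From HB Require Import structures.
From mathcomp Require Import all_boot all_order all_algebra.
From mathcomp Require Import perm.
From mathcomp Require Import reals.
Set Implicit Arguments. Unset Strict Implicit. Unset Printing Implicit Defensive.
Import Order.TTheory GRing.Theory Num.Theory.
Local Open Scope ring_scope.

Definition outcfg (I : finType) (T : I -> finType) := {dffun forall i : I, T i}.

Definition is_distr (R : numDomainType) (I : finType) (T : I -> finType)
  (P : outcfg T -> R) : Prop :=
  (forall o, 0 <= P o) /\ \sum_(o : outcfg T) P o = 1.

Definition marg1 (R : numDomainType) (I : finType) (T : I -> finType)
  (P : outcfg T -> R) (x : I) (a : T x) : R :=
  \sum_(o : outcfg T | o x == a) P o.
Arguments marg1 {R I T} P x a.

Definition marg2 (R : numDomainType) (I : finType) (T : I -> finType)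
  (P : outcfg T -> R) (x y : I) (a : T x) (b : T y) : R :=
  \sum_(o : outcfg T | (o x == a) && (o y == b)) P o.
Arguments marg2 {R I T} P x y a b.

(** A network: sources [S], parties ['I_n], [adj s i] means S_s -> A_i. *)
Definition bipartite_network (n : nat) (S : finType) (adj : S -> 'I_n -> bool)
  : Prop :=
  [/\ forall i : 'I_n, exists s : S, adj s i,
      forall s : S, exists i : 'I_n, adj s i,
      forall s t : S, s != t -> ~ (forall i, adj s i -> adj t i)
    & forall s : S, #|[pred i : 'I_n | adj s i]| = 2%N ].

Definition share (n : nat) (S : finType) (adj : S -> 'I_n -> bool)
  (i j : 'I_n) : bool := [exists s, adj s i && adj s j].

(** Non-fanout inflation of order d given permutations [pi s i] (used only
    when [adj s i]): party A_i^(k) is the pair (i,k) and it is adjacent to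
    the source S_s^(pi s i k) whenever adj s i. *)
Definition inf_share (n d : nat) (S : finType) (adj : S -> 'I_n -> bool)
  (pi : S -> 'I_n -> {perm 'I_d}) (x y : 'I_n * 'I_d) : bool :=
  [exists s, [&& adj s x.1, adj s y.1 & pi s x.1 x.2 == pi s y.1 y.2]].

Definition inf_alph (n d : nat) (O : 'I_n -> finType) (x : 'I_n * 'I_d) : finType :=
  O x.1.

(** Causally consistent model: [p] is the distribution on the network,
    [q d pi] the distribution on the inflation of order d with permutations
    pi (conditions imposed for d >= 2). *)
Definition causally_consistent (R : numDomainType) (n : nat) (S : finType)
  (adj : S -> 'I_n -> bool) (O : 'I_n -> finType)
  (p : outcfg O -> R)
  (q : forall d : nat, (S -> 'I_n -> {perm 'I_d}) -> outcfg (@inf_alph n d O) -> R)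
  : Prop :=
  [/\ is_distr p,
      forall i j : 'I_n, i != j -> ~~ share adj i j ->
        forall (a : O i) (b : O j),
          marg2 p i j a b = marg1 p i a * marg1 p j b
    & forall (d : nat) (pi : S -> 'I_n -> {perm 'I_d}), (1 < d)%N ->
      [/\ is_distr (q d pi),
          forall (x : 'I_n * 'I_d) (a : O x.1),
            marg1 (q d pi) x a = marg1 p x.1 a,
          forall (x y : 'I_n * 'I_d), x.1 != y.1 -> inf_share adj pi x y ->
            forall (a : O x.1) (b : O y.1),
              marg2 (q d pi) x y a b = marg2 p x.1 y.1 a b
        &
          forall (x y : 'I_n * 'I_d), x != y -> ~~ inf_share adj pi x y ->
            forall (a : O x.1) (b : O y.1),
              marg2 (q d pi) x y a b = marg1 (q d pi) x a * marg1 (q d pi) y b ] ].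

Definition expect (R : numDomainType) (I : finType) (T : I -> finType)
  (P : outcfg T -> R) (g : outcfg T -> R) : R :=
  \sum_(o : outcfg T) P o * g o.

(** covariance matrix C(f_1,...,f_n) (real-valued f_i, so no conjugation) *)
Definition covmx (R : numDomainType) (n : nat) (O : 'I_n -> finType)
  (p : outcfg O -> R) (f : forall i : 'I_n, O i -> R) : 'M[R]_n :=
  \matrix_(i, j) (expect p (fun o => f i (o i) * f j (o j))
                  - expect p (fun o => f i (o i)) * expect p (fun o => f j (o j))).

Definition schur (R : numDomainType) (m n : nat) (M N : 'M[R]_(m, n)) : 'M[R]_(m, n) :=
  \matrix_(i, j) (M i j * N i j).

Definition sign_function (R : numDomainType) (S : finType) (eps : S -> R) : Prop :=
  forall s, eps s = 1 \/ eps s = -1.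

Definition sign_matrix (R : numDomainType) (n : nat) (S : finType)
  (adj : S -> 'I_n -> bool) (eps : S -> R) (G : 'M[R]_n) : Prop :=
  [/\ G^T = G,
      forall i, G i i = 1
    & forall (i j : 'I_n) (s : S), i != j -> adj s i -> adj s j -> G i j = eps s].

Definition psd (R : numDomainType) (n : nat) (M : 'M[R]_n) : Prop :=
  M^T = M /\ forall v : 'cV[R]_n, 0 <= (v^T *m M *m v) 0 0.

(* Main.v *)
Require Import Defs.
From HB Require Import structures.
From mathcomp Require Import all_boot all_order all_algebra.
From mathcomp Require Import perm.
From mathcomp Require Import reals ring.
Import Order.TTheory GRing.Theory Num.Theory.
Local Open Scope ring_scope.

Lemma sum2x2 (R : numDomainType) (b : bool) (c : R) :
 \sum_(k < 2) \sum_(l < 2) ((-1) ^+ k * (-1) ^+ l * (if (k == l) == b then c else 0))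
  = 2 * ((if b then 1 else -1) * c).
Proof.
rewrite !big_ord_recl !big_ord0 /=.
case: b => /=; rewrite ?expr0 ?expr1; ring.
Qed.

Lemma expect_marg1 (R : numDomainType) (I : finType) (T : I -> finType)
  (P : outcfg T -> R) x (g : T x -> R) :
  expect P (fun o => g (o x)) = \sum_a marg1 P x a * g a.
Proof.
rewrite /expect (partition_big (fun o : outcfg T => o x) predT) //=.
apply: eq_bigr => a _; rewrite /marg1 big_distrl /=.
by apply: eq_bigr => o /eqP ->.
Qed.

Lemma expect_marg2 (R : numDomainType) (I : finType) (T : I -> finType)
  (P : outcfg T -> R) x y (g : T x -> R) (h : T y -> R) :
  expect P (fun o => g (o x) * h (o y)) = \sum_a \sum_b marg2 P x y a b * (g a * h b).
Proof.
rewrite /expect (partition_big (fun o : outcfg T => o x) predT) //=.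
apply: eq_bigr => a _.
rewrite (partition_big (fun o : outcfg T => o y) predT) //=.
apply: eq_bigr => b _; rewrite /marg2 big_distrl /=.
by apply: eq_bigr => o /andP[/eqP -> /eqP ->].
Qed.

Lemma cov_expand (R : numDomainType) (I : finType) (T : I -> finType)
  (P : outcfg T -> R) x y (g : T x -> R) (h : T y -> R) :
  is_distr P ->
  expect P (fun o => (g (o x) - expect P (fun o => g (o x))) *
                     (h (o y) - expect P (fun o => h (o y))))
  = expect P (fun o => g (o x) * h (o y))
    - expect P (fun o => g (o x)) * expect P (fun o => h (o y)).
Proof.
move=> [_ P1].
have gen : forall m1 m2, expect P (fun o => (g (o x) - m1) * (h (o y) - m2)) =
   expect P (fun o => g (o x) * h (o y)) - m2 * expect P (fun o => g (o x))
   - m1 * expect P (fun o => h (o y)) + m1 * m2.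
  move=> m1 m2; rewrite /expect.
  have -> : \sum_o P o * ((g (o x) - m1) * (h (o y) - m2)) =
     \sum_o (P o * (g (o x) * h (o y)) - m2 * (P o * g (o x)) - m1 * (P o * h (o y))
         + m1 * m2 * P o).
    by apply: eq_bigr => o _; ring.
  by rewrite big_split /= !sumrB -!mulr_sumr P1 mulr1.
rewrite gen; ring.
Qed.

Lemma indep_expect (R : numDomainType) (I : finType) (T : I -> finType)
  (P : outcfg T -> R) x y (g : T x -> R) (h : T y -> R) :
  (forall a b, marg2 P x y a b = marg1 P x a * marg1 P y b) ->
  expect P (fun o => g (o x) * h (o y)) =
  expect P (fun o => g (o x)) * expect P (fun o => h (o y)).
Proof.
move=> H; rewrite expect_marg2 !expect_marg1 big_distrl; apply: eq_bigr => a _.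
rewrite big_distrr; apply: eq_bigr => b _ /=; rewrite H; ring.
Qed.

Lemma parties2 (n : nat) (S : finType) (adj : S -> 'I_n -> bool) s i j k :
  bipartite_network adj -> i != j -> adj s i -> adj s j -> adj s k ->
  (k == i) || (k == j).
Proof.
move=> [_ _ _ H2] ij si sj sk; apply/negPn/negP => /norP [ki kj].
have := H2 s; rewrite (cardD1 i) (cardD1 j) (cardD1 k) !inE si sj sk.
by rewrite eq_sym ij /= ki kj.
Qed.

Lemma uniq_src (n : nat) (S : finType) (adj : S -> 'I_n -> bool) s t i j :
  bipartite_network adj -> i != j -> adj s i -> adj s j -> adj t i -> adj t j ->
  s = t.
Proof.
move=> hb ij si sj ti tj; case: (eqVneq s t) => // st; exfalso.
have hb' := hb; case: hb' => [h0 h1 H3 h2]; apply: (H3 s t st) => k sk.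
by case/orP: (@parties2 _ _ _ s i j k hb ij si sj sk) => /eqP ->.
Qed.

From mathcomp Require Import lra.

Definition swap2 : {perm 'I_2} := tperm ord0 ord_max.

Lemma I2cases (k : 'I_2) : k = ord0 \/ k = ord_max.
Proof. by case: k => [[|[|m]] h] //; [left|right]; apply/val_inj. Qed.

Lemma swap2E (k l : 'I_2) : (swap2 k == l) = (k != l).
Proof.
rewrite /swap2; case: (I2cases k) => ->; case: (I2cases l) => ->;
by rewrite ?tpermL ?tpermR.
Qed.

Definition mkpi (R : numDomainType) (n : nat) (S : finType) (adj : S -> 'I_n -> bool)
  (eps : S -> R) (s : S) (i : 'I_n) : {perm 'I_2} :=
  if (eps s != 1) && [exists j : 'I_n, adj s j && (j < i)%N] then swap2 else 1%g.
Arguments mkpi {R n S} adj eps s i.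

Lemma bigval (n : nat) (S : finType) (adj : S -> 'I_n -> bool) s i j :
  bipartite_network adj -> i != j -> adj s i -> adj s j ->
  [exists j' : 'I_n, adj s j' && (j' < i)%N] = (j < i)%N.
Proof.
move=> hb ij si sj; apply/existsP/idP => [[j' /andP [sj' lt]]|lt].
  case/orP: (@parties2 _ _ _ s i j j' hb ij si sj sj') => /eqP e; subst j' => //.
  by rewrite ltnn in lt.
by exists j; rewrite sj.
Qed.

Lemma infshare_val (R : realDomainType) (n : nat) (S : finType)
  (adj : S -> 'I_n -> bool) (eps : S -> R) s i j k l :
  bipartite_network adj -> sign_function eps -> i != j -> adj s i -> adj s j ->
  inf_share adj (mkpi adj eps) ((i, k) : 'I_n * 'I_2) (j, l) = ((k == l) == (eps s == 1)).
Proof.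
move=> hb hs ij si sj.
have -> : inf_share adj (mkpi adj eps) ((i, k) : 'I_n * 'I_2) (j, l) =
          (mkpi adj eps s i k == mkpi adj eps s j l).
  rewrite /inf_share /=; apply/existsP/idP => [[t /and3P [ti tj e]]| e].
    by move: e; rewrite -(@uniq_src _ _ _ s t i j hb ij si sj ti tj).
  by exists s; rewrite si sj e.
rewrite /mkpi (@bigval _ _ _ s i j hb ij si sj).
rewrite (@bigval _ _ _ s j i hb _ sj si); last by rewrite eq_sym.
case: (hs s) => ->.
  by rewrite eqxx /= !perm1 eqb_id.
have e : ((-1 : R) == 1) = false by apply/negP => /eqP h; lra.
rewrite e /=.
case: ltngtP => /= h; rewrite ?perm1;
  first [ by rewrite swap2E; case: (k == l)
        | by rewrite eq_sym swap2E eq_sym; case: (k == l)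
        | by move: ij; rewrite (val_inj h) eqxx ].
Qed.

Lemma cov0 (R : numDomainType) (n : nat) (S : finType)
  (adj : S -> 'I_n -> bool) (O : 'I_n -> finType) (p : outcfg O -> R)
  (q : forall d : nat, (S -> 'I_n -> {perm 'I_d}) -> outcfg (@inf_alph n d O) -> R)
  (f : forall i : 'I_n, O i -> R) i j :
  causally_consistent adj p q -> i != j -> ~~ share adj i j -> covmx p f i j = 0.
Proof.
case=> hp hC0 _ ij nsh.
by rewrite mxE (@indep_expect _ _ _ p i j (f i) (f j) (hC0 i j ij nsh)) subrr.
Qed.

Definition icov (R : numDomainType) (n d : nat) (O : 'I_n -> finType)
  (Q : outcfg (@inf_alph n d O) -> R) (f : forall i : 'I_n, O i -> R) (x y : 'I_n * 'I_d) : R :=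
  expect Q (fun o => (f x.1 (o x) - expect Q (fun o => f x.1 (o x))) *
                     (f y.1 (o y) - expect Q (fun o => f y.1 (o y)))).
Arguments icov {R n d O} Q f x y.

Lemma covQ (R : numDomainType) (n : nat) (S : finType)
  (adj : S -> 'I_n -> bool) (O : 'I_n -> finType) (p : outcfg O -> R)
  (q : forall d : nat, (S -> 'I_n -> {perm 'I_d}) -> outcfg (@inf_alph n d O) -> R)
  (f : forall i : 'I_n, O i -> R) d pi (x y : 'I_n * 'I_d) :
  causally_consistent adj p q -> (1 < d)%N ->
  icov (q d pi) f x y
  = if x == y then covmx p f x.1 x.1
    else if inf_share adj pi x y then covmx p f x.1 y.1 else 0.
Proof.
case=> hp hC0 hinf hd; case: (hinf d pi hd) => hQ C1 C1' C2; rewrite /icov.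
rewrite (@cov_expand _ _ _ (q d pi) x y (f x.1) (f y.1) hQ).
have E1 : forall z : 'I_n * 'I_d,
    expect (q d pi) (fun o => f z.1 (o z)) = expect p (fun o => f z.1 (o z.1)).
  move=> z; rewrite (@expect_marg1 _ _ _ (q d pi) z (f z.1)).
  rewrite (@expect_marg1 _ _ _ p z.1 (f z.1)).
  by apply: eq_bigr => a _; rewrite C1.
case: eqVneq => [<-|xy].
  rewrite (@expect_marg1 _ _ _ (q d pi) x (fun a => f x.1 a * f x.1 a)) E1 mxE.
  rewrite (@expect_marg1 _ _ _ p x.1 (fun a => f x.1 a * f x.1 a)).
  by congr (_ - _); apply: eq_bigr => a _; rewrite C1.
case: ifP => sh.
  have x12 : x.1 != y.1.
    apply/negP => /eqP e; move: sh xy e; case: x => i k; case: y => j l /= sh xy e.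
    subst j; move/existsP: sh => [t /and3P [_ _ /eqP /perm_inj kl]].
    by move: xy; rewrite /= in kl; rewrite kl eqxx.
  rewrite (@expect_marg2 _ _ _ (q d pi) x y (f x.1) (f y.1)) !E1 mxE.
  rewrite (@expect_marg2 _ _ _ p x.1 y.1 (f x.1) (f y.1)).
  congr (_ - _); apply: eq_bigr => a _; apply: eq_bigr => b _.
  by rewrite C1'.
by rewrite (@indep_expect _ _ _ (q d pi) x y (f x.1) (f y.1) (C2 x y xy (negbT sh))) subrr.
Qed.

Lemma pairsum (R : realDomainType) (n : nat) (S : finType)
  (adj : S -> 'I_n -> bool) (O : 'I_n -> finType) (p : outcfg O -> R)
  (q : forall d : nat, (S -> 'I_n -> {perm 'I_d}) -> outcfg (@inf_alph n d O) -> R)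
  (f : forall i : 'I_n, O i -> R) (eps : S -> R) (G : 'M[R]_n) i j :
  bipartite_network adj -> causally_consistent adj p q ->
  sign_function eps -> sign_matrix adj eps G ->
  \sum_(k < 2) \sum_(l < 2) ((-1) ^+ k * (-1) ^+ l *
      icov (q 2 (mkpi adj eps)) f (i, k) (j, l))
  = 2 * (covmx p f i j * G i j).
Proof.
move=> hb hc hs [_ Gd Go].
have key : forall i j b c, (forall k l : 'I_2,
      icov (q 2 (mkpi adj eps)) f (i, k) (j, l) = if (k == l) == b then c else 0) ->
    \sum_(k < 2) \sum_(l < 2) ((-1) ^+ k * (-1) ^+ l *
      icov (q 2 (mkpi adj eps)) f (i, k) (j, l)) = 2 * ((if b then 1 else -1) * c).
  move=> i' j' b c H; rewrite -sum2x2; apply: eq_bigr => k _; apply: eq_bigr => l _.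
  by rewrite H.
case: (eqVneq i j) => [<-|ij].
  rewrite (key i i true (covmx p f i i)) ?Gd ?mulr1 ?mul1r // => k l.
  rewrite (@covQ _ _ _ _ _ _ _ f 2 (mkpi adj eps) _ _ hc) //= eqb_id xpair_eqE eqxx /=.
  case: eqVneq => // kl; case: ifP => // /existsP [t /and3P [_ _ /eqP /perm_inj e]].
  by move: kl; rewrite /= in e; rewrite e eqxx.
case: (boolP (share adj i j)) => [/existsP [s /andP [si sj]]|nsh].
  rewrite (key i j (eps s == 1) (covmx p f i j)) ?(Go i j s ij si sj).
    case: (hs s) => ->; rewrite ?eqxx ?mul1r ?mulr1 //.
    by case: eqP => h; [lra | ring].
  move=> k l; rewrite (@covQ _ _ _ _ _ _ _ f 2 (mkpi adj eps) _ _ hc) //= xpair_eqE (negbTE ij) /=.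
  by rewrite (@infshare_val _ _ _ adj eps s i j k l hb hs ij si sj).
rewrite (@cov0 _ _ _ _ _ p q f i j hc ij nsh) mul0r mulr0.
rewrite (key i j true 0) ?mulr0 // => k l.
rewrite (@covQ _ _ _ _ _ _ _ f 2 (mkpi adj eps) _ _ hc) //= xpair_eqE (negbTE ij) /=.
by case: ifP => // _; case: ifP => // _; rewrite (@cov0 _ _ _ _ _ p q f i j hc ij nsh).
Qed.

Lemma pairI (R : numDomainType) (n : nat) (F : 'I_n * 'I_2 -> R) :
  \sum_(x : 'I_n * 'I_2) F x = \sum_(i < n) \sum_(k < 2) F (i, k).
Proof. by rewrite (pair_big xpredT xpredT (fun i k => F (i, k))); apply: eq_bigr => [[]]. Qed.

Lemma var_ge0 (R : realDomainType) (n : nat) (O : 'I_n -> finType)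
  (Q : outcfg (@inf_alph n 2 O) -> R) (f : forall i : 'I_n, O i -> R)
  (w : 'I_n * 'I_2 -> R) :
  is_distr Q ->
  0 <= \sum_(x : 'I_n * 'I_2) \sum_(y : 'I_n * 'I_2) w x * w y * icov Q f x y.
Proof.
move=> [Q0 _].
set g := fun (x : 'I_n * 'I_2) (o : outcfg (@inf_alph n 2 O)) =>
  f x.1 (o x) - expect Q (fun o => f x.1 (o x)).
have : 0 <= \sum_o Q o * ((\sum_x w x * g x o) * (\sum_y w y * g y o)).
  apply: sumr_ge0 => o _; apply: mulr_ge0 => //; rewrite -expr2; exact: sqr_ge0.
have -> : \sum_o Q o * ((\sum_x w x * g x o) * (\sum_y w y * g y o)) =
          \sum_o \sum_x \sum_y w x * w y * (Q o * (g x o * g y o)).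
  apply: eq_bigr => o _; rewrite mulr_suml mulr_sumr; apply: eq_bigr => x _.
  rewrite mulr_sumr mulr_sumr; apply: eq_bigr => y _; ring.
rewrite exchange_big /=.
under eq_bigr do rewrite exchange_big /=.
suff -> : \sum_x \sum_y w x * w y * icov Q f x y =
          \sum_x \sum_y \sum_o w x * w y * (Q o * (g x o * g y o)) by [].
apply: eq_bigr => x _; apply: eq_bigr => y _; rewrite /icov /expect mulr_sumr.
by apply: eq_bigr.
Qed.

Theorem lemma4 (R : realType) (n : nat) (S : finType)
  (adj : S -> 'I_n -> bool) (O : 'I_n -> finType)
  (p : outcfg O -> R)
  (q : forall d : nat, (S -> 'I_n -> {perm 'I_d}) -> outcfg (@inf_alph n d O) -> R)
  (f : forall i : 'I_n, O i -> R) (eps : S -> R) (G : 'M[R]_n) :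
  bipartite_network adj ->
  causally_consistent adj p q ->
  sign_function eps ->
  sign_matrix adj eps G ->
  psd (schur (covmx p f) G).
Proof.
move=> hb hc hs hG; have [GT Gd Go] := hG.
split.
  apply/matrixP => i j; rewrite !mxE.
  have : G^T i j = G i j by rewrite GT.
  rewrite mxE => ->; congr (_ * _); congr (_ - _); last exact: mulrC.
  by rewrite /expect; apply: eq_bigr => o _; rewrite [f j _ * _]mulrC.
move=> v.
have hQ : is_distr (q 2 (mkpi adj eps)).
  by case: hc => _ _ h; case: (h 2%N (mkpi adj eps) isT).
have H := @var_ge0 _ _ _ _ f (fun x => v x.1 0 * (-1) ^+ x.2) hQ.
set T := (v^T *m schur (covmx p f) G *m v) 0 0.
suff E : \sum_(x : 'I_n * 'I_2) \sum_(y : 'I_n * 'I_2)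
   v x.1 0 * (-1) ^+ x.2 * (v y.1 0 * (-1) ^+ y.2) * icov (q 2 (mkpi adj eps)) f x y
   = 2 * T.
  by rewrite E in H; lra.
rewrite pairI.
under eq_bigr => i _ do under eq_bigr => k _ do rewrite pairI.
under eq_bigr => i _ do rewrite exchange_big /=.
have -> : T = \sum_i \sum_j v i 0 * v j 0 * (covmx p f i j * G i j).
  rewrite /T mxE exchange_big /=; apply: eq_bigr => i _.
  rewrite !mxE big_distrl /=; apply: eq_bigr => j _; rewrite !mxE; ring.
rewrite mulr_sumr; apply: eq_bigr => i _; rewrite mulr_sumr; apply: eq_bigr => j _.
rewrite mulrCA -(@pairsum _ _ _ adj O p q f eps G i j hb hc hs hG).
rewrite mulr_sumr; apply: eq_bigr => k _; rewrite mulr_sumr; apply: eq_bigr => l _.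
simpl; ring.
Qed.
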